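(* Let $\frac\pi4\le\gamma_1\le\frac\pi2$ and $\gamma_2=\frac\pi2-\gamma_1$, and for $x_3\in[-1,1]$ let $\rho(x_3)=\frac12(\Sigma_0+x_3\Sigma_3)$. Then $$\min_{x_3\in[-1,1]} g(\rho(x_3))=\frac{[1+\cos(2\gamma_1)+\sqrt2\sin\gamma_1]^2}{[3+\cos(2\gamma_1)]^2},$$ attained at $x_3=\frac{2\sin\gamma_1(\sin\gamma_1-\sqrt2)}{3+\cos(2\gamma_1)}$; this minimum value is increasing in $\gamma_1$ on $[\frac\pi4,\frac\pi2]$, so its smallest value $\frac49$ occurs at $\gamma_1=\frac\pi4$, $x_3=-\frac13$.
   Context: On two qubits, let $\sigma_1,\sigma_2,\sigma_3$ denote the Pauli matrices acting on the first qubit and $\tau_1,\tau_2,\tau_3$ those acting on the second qubit. For parameters $\gamma_1,\gamma_2$ set $u=\cos\gamma_1\cos\gamma_2$, $v=\sin\gamma_1\sin\gamma_2$, $z_1=\sin\gamma_1\cos\gamma_2$, $z_2=\cos\gamma_1\sin\gamma_2$, and define $\Sigma_0=\frac12(I+u\sigma_3+v\tau_3+z_1\sigma_1\tau_1+z_2\sigma_2\tau_2)$ and $\Sigma_3=\frac12(v\sigma_3+u\tau_3-z_2\sigma_1\tau_1-z_1\sigma_2\tau_2+\sigma_3\tau_3)$. For a two-qubit density matrix $\rho$, $g(\rho):=\max\operatorname{tr}[\rho(\rho_1\otimes\rho_2)]$ over all pure single-qubit states $\rho_1,\rho_2$. *)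

(* Defs.v *)
From Stdlib Require Import Reals Lra.
Open Scope R_scope.

Definition C : Type := (R * R)%type.
Definition Cre (z : C) : R := fst z.
Definition Cim (z : C) : R := snd z.
Definition Cadd (z w : C) : C := (fst z + fst w, snd z + snd w).
Definition Cmul (z w : C) : C :=
  (fst z * fst w - snd z * snd w, fst z * snd w + snd z * fst w).
Definition Cconj (z : C) : C := (fst z, - snd z).
Definition RtoC (r : R) : C := (r, 0).
Definition Cnorm2 (z : C) : R := fst z * fst z + snd z * snd z.
Definition C0 : C := (0, 0).
Definition C1 : C := (1, 0).
Definition Ci : C := (0, 1).

Fixpoint csum (n : nat) (f : nat -> C) : C :=
  match n with
  | O => C0
  | S m => Cadd (csum m f) (f m)
  end.

(** Matrices as functions of (row, column) indices; an n x n matrix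
    uses indices 0..n-1. *)
Definition Mat : Type := nat -> nat -> C.
Definition mmul (n : nat) (A B : Mat) : Mat :=
  fun i j => csum n (fun k => Cmul (A i k) (B k j)).
Definition madd (A B : Mat) : Mat := fun i j => Cadd (A i j) (B i j).
Definition mscale (r : R) (A : Mat) : Mat := fun i j => Cmul (RtoC r) (A i j).
Definition trace (n : nat) (A : Mat) : C := csum n (fun i => A i i).
Definition Id (i j : nat) : C := if Nat.eqb i j then C1 else C0.

(** Kronecker product of two 2x2 matrices (first factor = first qubit):
    index of basis vector |a b> is 2a+b. *)
Definition kron (A B : Mat) : Mat :=
  fun i j => Cmul (A (Nat.div i 2) (Nat.div j 2)) (B (Nat.modulo i 2) (Nat.modulo j 2)).

Definition pauli1 : Mat := fun i j =>
  match i, j with 0%nat, 1%nat => C1 | 1%nat, 0%nat => C1 | _, _ => C0 end.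
Definition pauli2 : Mat := fun i j =>
  match i, j with 0%nat, 1%nat => (0, -1) | 1%nat, 0%nat => Ci | _, _ => C0 end.
Definition pauli3 : Mat := fun i j =>
  match i, j with 0%nat, 0%nat => C1 | 1%nat, 1%nat => (-1, 0) | _, _ => C0 end.

Definition sig1 : Mat := kron pauli1 Id.
Definition sig2 : Mat := kron pauli2 Id.
Definition sig3 : Mat := kron pauli3 Id.
Definition tau1 : Mat := kron Id pauli1.
Definition tau2 : Mat := kron Id pauli2.
Definition tau3 : Mat := kron Id pauli3.

Definition u_ (g1 g2 : R) : R := cos g1 * cos g2.
Definition v_ (g1 g2 : R) : R := sin g1 * sin g2.
Definition z1_ (g1 g2 : R) : R := sin g1 * cos g2.
Definition z2_ (g1 g2 : R) : R := cos g1 * sin g2.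

Definition Sigma0 (g1 g2 : R) : Mat :=
  mscale (1/2)
    (madd Id
    (madd (mscale (u_ g1 g2) sig3)
    (madd (mscale (v_ g1 g2) tau3)
    (madd (mscale (z1_ g1 g2) (mmul 4 sig1 tau1))
          (mscale (z2_ g1 g2) (mmul 4 sig2 tau2)))))).

Definition Sigma3 (g1 g2 : R) : Mat :=
  mscale (1/2)
    (madd (mscale (v_ g1 g2) sig3)
    (madd (mscale (u_ g1 g2) tau3)
    (madd (mscale (- z2_ g1 g2) (mmul 4 sig1 tau1))
    (madd (mscale (- z1_ g1 g2) (mmul 4 sig2 tau2))
          (mmul 4 sig3 tau3))))).

Definition rho (g1 g2 x3 : R) : Mat :=
  mscale (1/2) (madd (Sigma0 g1 g2) (mscale x3 (Sigma3 g1 g2))).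

Definition unit_vec (psi : nat -> C) : Prop :=
  Cnorm2 (psi 0%nat) + Cnorm2 (psi 1%nat) = 1.
Definition proj (psi : nat -> C) : Mat := fun i j => Cmul (psi i) (Cconj (psi j)).

(** tr[rho (rho1 ⊗ rho2)] (real part; it is real for Hermitian rho). *)
Definition overlap (r : Mat) (psi phi : nat -> C) : R :=
  Cre (trace 4 (mmul 4 r (kron (proj psi) (proj phi)))).

(** is_g r m : m = g(r) = max over pure product states of tr[r (rho1 ⊗ rho2)],
    i.e. m is attained and is an upper bound. *)
Definition is_g (r : Mat) (m : R) : Prop :=
  (exists psi phi, unit_vec psi /\ unit_vec phi /\ overlap r psi phi = m) /\
  (forall psi phi, unit_vec psi -> unit_vec phi -> overlap r psi phi <= m).

Definition Mval (g1 : R) : R :=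
  (1 + cos (2 * g1) + sqrt 2 * sin g1) ^ 2 / (3 + cos (2 * g1)) ^ 2.
Definition x3star (g1 : R) : R :=
  2 * sin g1 * (sin g1 - sqrt 2) / (3 + cos (2 * g1)).

(* Main.v *)
Require Import Defs.
From Stdlib Require Import Reals Lra Lia.
Open Scope R_scope.
Ltac mcomp := cbv beta iota zeta delta [overlap trace mmul rho Sigma0 Sigma3 madd mscale kron proj sig1 sig2 sig3 tau1 tau2 tau3 csum Nat.div Nat.modulo Nat.divmod Nat.sub fst snd Id Nat.eqb pauli1 pauli2 pauli3 Cmul Cadd Cconj RtoC Defs.C0 Defs.C1 Defs.Ci Cre Cnorm2].

Definition bx (psi : nat -> Defs.C) := 2*(fst(psi 0%nat)*fst(psi 1%nat) + snd(psi 0%nat)*snd(psi 1%nat)).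
Definition by_ (psi : nat -> Defs.C) := 2*(fst(psi 0%nat)*snd(psi 1%nat) - snd(psi 0%nat)*fst(psi 1%nat)).
Definition bz (psi : nat -> Defs.C) := Cnorm2 (psi 0%nat) - Cnorm2 (psi 1%nat).
Definition nrm (psi : nat -> Defs.C) := Cnorm2 (psi 0%nat) + Cnorm2 (psi 1%nat).

Definition rhoE (A B P1 P2 x : R) : Mat := fun i j =>
  match i, j with
  | 0%nat, 0%nat => ((1 + A + B + x)/4, 0)
  | 1%nat, 1%nat => ((1 + A - B - x)/4, 0)
  | 2%nat, 2%nat => ((1 - A + B - x)/4, 0)
  | 3%nat, 3%nat => ((1 - A - B + x)/4, 0)
  | 0%nat, 3%nat | 3%nat, 0%nat => ((P1 - P2)/4, 0)
  | 1%nat, 2%nat | 2%nat, 1%nat => ((P1 + P2)/4, 0)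
  | _, _ => (0, 0)
  end.

Lemma rho_entries g1 g2 x i j : (i < 4)%nat -> (j < 4)%nat ->
  rho g1 g2 x i j = rhoE (u_ g1 g2 + x * v_ g1 g2) (v_ g1 g2 + x * u_ g1 g2)
     (z1_ g1 g2 - x * z2_ g1 g2) (z2_ g1 g2 - x * z1_ g1 g2) x i j.
Proof.
  intros Hi Hj.
  destruct i as [|[|[|[|i]]]]; try lia; destruct j as [|[|[|[|j]]]]; try lia;
  (mcomp; cbv beta iota delta [rhoE]; f_equal; lra).
Qed.

Lemma csum_ext n f g : (forall k, (k < n)%nat -> f k = g k) -> csum n f = csum n g.
Proof.
  induction n; intros H; simpl; [reflexivity|].
  rewrite IHn by (intros; apply H; lia). rewrite H by lia. reflexivity.
Qed.

Lemma overlap_ext r r' psi phi : (forall i j, (i<4)%nat -> (j<4)%nat -> r i j = r' i j) ->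
  overlap r psi phi = overlap r' psi phi.
Proof.
  intros H. unfold overlap, trace, mmul. f_equal.
  apply csum_ext; intros i Hi. apply csum_ext; intros k Hk. rewrite H by lia. reflexivity.
Qed.


Lemma overlap_rhoE A B P1 P2 x psi phi :
  overlap (rhoE A B P1 P2 x) psi phi =
  1/4 * (nrm psi * nrm phi + A * bz psi * nrm phi + B * nrm psi * bz phi
       + P1 * bx psi * bx phi + P2 * by_ psi * by_ phi + x * bz psi * bz phi).
Proof.
  unfold bx, by_, bz, nrm.
  mcomp. cbv beta iota delta [rhoE].
  destruct (psi 0%nat), (psi 1%nat), (phi 0%nat), (phi 1%nat). cbv beta iota. field.
Qed.

Definition Fv k p q x a1 a2 a3 b1 b2 b3 :=
  1/4*(1 + k*(a3+b3) + p*a1*b1 + q*a2*b2 + x*a3*b3).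

Lemma ov_reduce g1 x psi phi : unit_vec psi -> unit_vec phi ->
  overlap (rho g1 (PI/2 - g1) x) psi phi =
  Fv (cos g1 * sin g1 * (1 + x)) (sin g1 * sin g1 - x * (cos g1 * cos g1))
     (cos g1 * cos g1 - x * (sin g1 * sin g1)) x
     (bx psi) (by_ psi) (bz psi) (bx phi) (by_ phi) (bz phi).
Proof.
  intros Hpsi Hphi.
  rewrite (overlap_ext _ _ psi phi (rho_entries g1 (PI/2 - g1) x)).
  rewrite overlap_rhoE. unfold u_, v_, z1_, z2_. rewrite cos_shift, sin_shift.
  unfold unit_vec in *. unfold nrm. rewrite Hpsi, Hphi. unfold Fv. field.
Qed.

Lemma bloch_norm psi : unit_vec psi ->
  bx psi * bx psi + by_ psi * by_ psi + bz psi * bz psi = 1.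
Proof.
  unfold unit_vec; intros H.
  assert (E : bx psi * bx psi + by_ psi * by_ psi + bz psi * bz psi =
    (Cnorm2 (psi 0%nat) + Cnorm2 (psi 1%nat)) * (Cnorm2 (psi 0%nat) + Cnorm2 (psi 1%nat))).
  { unfold bx, by_, bz, Cnorm2. ring. }
  rewrite E, H. ring.
Qed.

Lemma state_of a1 a2 a3 : a1*a1 + a2*a2 + a3*a3 = 1 ->
  exists psi, unit_vec psi /\ bx psi = a1 /\ by_ psi = a2 /\ bz psi = a3.
Proof.
  intros H.
  destruct (Req_dec a3 (-1)) as [E|E].
  - exists (fun i => match i with 0%nat => (0,0) | _ => (1,0) end).
    assert (a1 = 0) by nra. assert (a2 = 0) by nra. subst.
    unfold unit_vec, bx, by_, bz, Cnorm2; simpl. repeat split; ring.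
  - assert (Ha3 : -1 < a3) by nra.
    set (x0 := sqrt ((1 + a3)/2)).
    assert (Hx0 : x0 * x0 = (1 + a3)/2) by (apply sqrt_sqrt; lra).
    assert (Hx0p : 0 < x0) by (apply sqrt_lt_R0; lra).
    clearbody x0.
    exists (fun i => match i with 0%nat => (x0,0) | _ => (a1/(2*x0), a2/(2*x0)) end).
    unfold unit_vec, bx, by_, bz, Cnorm2; simpl.
    assert (K : a1 / (2 * x0) * (a1 / (2 * x0)) + a2 / (2 * x0) * (a2 / (2 * x0))
              = (a1*a1 + a2*a2) / (4 * (x0*x0))) by (field; lra).
    repeat split.
    + rewrite K, Hx0. field_simplify_eq; nra.
    + field; lra.
    + field; lra.
    + rewrite K, Hx0. field_simplify_eq; nra.
Qed.

Lemma cs_sqrt w1 w2 w3 b1 b2 b3 : b1*b1+b2*b2+b3*b3 = 1 ->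
  w1*b1+w2*b2+w3*b3 <= sqrt (w1*w1+w2*w2+w3*w3).
Proof.
  intros Hb.
  destruct (Rle_dec (w1*b1+w2*b2+w3*b3) 0).
  - pose proof (sqrt_pos (w1*w1+w2*w2+w3*w3)); lra.
  - rewrite <- (sqrt_square (w1*b1+w2*b2+w3*b3)) by lra.
    apply sqrt_le_1_alt.
    assert (L : (w1*w1+w2*w2+w3*w3)*(b1*b1+b2*b2+b3*b3) - (w1*b1+w2*b2+w3*b3)*(w1*b1+w2*b2+w3*b3)
      = (w1*b2-w2*b1)*(w1*b2-w2*b1) + (w1*b3-w3*b1)*(w1*b3-w3*b1) + (w2*b3-w3*b2)*(w2*b3-w3*b2)) by ring.
    rewrite Hb in L.
    pose proof (Rle_0_sqr (w1*b2-w2*b1)). pose proof (Rle_0_sqr (w1*b3-w3*b1)).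
    pose proof (Rle_0_sqr (w2*b3-w3*b2)). unfold Rsqr in *. lra.
Qed.

Lemma exists_b w1 w2 w3 : exists b1 b2 b3, b1*b1+b2*b2+b3*b3 = 1 /\
  w1*b1+w2*b2+w3*b3 = sqrt (w1*w1+w2*w2+w3*w3).
Proof.
  destruct (Req_dec (w1*w1+w2*w2+w3*w3) 0) as [H0|H0].
  - exists 0, 0, 1. rewrite H0, sqrt_0. assert (w3 = 0) by nra. subst. split; ring.
  - assert (Hpos : 0 < w1*w1+w2*w2+w3*w3) by nra.
    set (n := sqrt (w1*w1+w2*w2+w3*w3)).
    assert (Hn : n * n = w1*w1+w2*w2+w3*w3) by (apply sqrt_sqrt; lra).
    assert (Hnp : 0 < n) by (apply sqrt_lt_R0; lra).
    clearbody n.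
    exists (w1/n), (w2/n), (w3/n). split.
    + replace (w1 / n * (w1 / n) + w2 / n * (w2 / n) + w3 / n * (w3 / n))
        with ((w1*w1+w2*w2+w3*w3)/(n*n)) by (field; lra).
      rewrite <- Hn. field; lra.
    + replace (w1 * (w1 / n) + w2 * (w2 / n) + w3 * (w3 / n))
        with ((w1*w1+w2*w2+w3*w3)/n) by (field; lra).
      rewrite <- Hn. field; lra.
Qed.

Lemma quad_nonneg p q y z : Rabs q <= p -> 0 <= p/2*(y*y+z*z) - q*y*z.
Proof.
  unfold Rabs; destruct (Rcase_abs q); intros H.
  - pose proof (Rle_0_sqr y); pose proof (Rle_0_sqr z); unfold Rsqr in *.
    assert (0 <= (p+q)*(y*y+z*z)) by (apply Rmult_le_pos; lra).
    assert (0 <= -q*((y+z)*(y+z))) by (apply Rmult_le_pos; [lra| apply Rle_0_sqr]). lra.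
  - pose proof (Rle_0_sqr y); pose proof (Rle_0_sqr z); unfold Rsqr in *.
    assert (0 <= (p-q)*(y*y+z*z)) by (apply Rmult_le_pos; lra).
    assert (0 <= q*((y-z)*(y-z))) by (apply Rmult_le_pos; [lra| apply Rle_0_sqr]). lra.
Qed.

Lemma ub_gen k p q x a1 a2 a3 b1 b2 b3 :
  Rabs q <= p -> Rabs x <= p -> 0 < p - x ->
  a1*a1+a2*a2+a3*a3 = 1 -> b1*b1+b2*b2+b3*b3 = 1 ->
  k*(a3+b3) + p*a1*b1 + q*a2*b2 + x*a3*b3 <= p + k*k/(p-x).
Proof.
  intros Hq Hx Hpx Ha Hb.
  set (t0 := k/(p-x)).
  assert (E : p + k*k/(p-x) - (k*(a3+b3) + p*a1*b1 + q*a2*b2 + x*a3*b3) =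
     p/2*((a1-b1)*(a1-b1)) + (p/2*(a2*a2+b2*b2) - q*a2*b2)
     + (p/2*((a3-t0)*(a3-t0) + (b3-t0)*(b3-t0)) - x*(a3-t0)*(b3-t0))
     + p/2*((1 - (a1*a1+a2*a2+a3*a3)) + (1 - (b1*b1+b2*b2+b3*b3)))).
  { unfold t0. field. lra. }
  rewrite Ha, Hb in E.
  pose proof (quad_nonneg p q a2 b2 Hq).
  pose proof (quad_nonneg p x (a3-t0) (b3-t0) Hx).
  pose proof (Rabs_pos q).
  assert (0 <= p/2*((a1-b1)*(a1-b1))) by (apply Rmult_le_pos; [lra | apply Rle_0_sqr]).
  lra.
Qed.
Lemma exist_max k p q x : exists m,
 (exists a1 a2 a3 b1 b2 b3, a1*a1+a2*a2+a3*a3 = 1 /\ b1*b1+b2*b2+b3*b3 = 1 /\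
     Fv k p q x a1 a2 a3 b1 b2 b3 = m) /\
 (forall a1 a2 a3 b1 b2 b3, a1*a1+a2*a2+a3*a3 = 1 -> b1*b1+b2*b2+b3*b3 = 1 ->
     Fv k p q x a1 a2 a3 b1 b2 b3 <= m).
Proof.
  set (P := Rmax (p*p) (q*q)).
  assert (HP1 : p*p <= P) by apply Rmax_l.
  assert (HP2 : q*q <= P) by apply Rmax_r.
  assert (HP0 : 0 <= P) by (pose proof (Rle_0_sqr p); unfold Rsqr in *; lra).
  set (Q := fun t => P*(1-t*t) + (k+x*t)*(k+x*t)).
  set (h := fun t => k*t + sqrt (Q t)).
  assert (HQpos : forall t, -1 <= t <= 1 -> 0 <= Q t).
  { intros t Ht. unfold Q. pose proof (Rle_0_sqr (k+x*t)). unfold Rsqr in *.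
    assert (0 <= P*(1-t*t)) by (apply Rmult_le_pos; nra). lra. }
  assert (Hcont : forall c, -1 <= c <= 1 -> continuity_pt h c).
  { intros c Hc. unfold h.
    apply (continuity_pt_plus (fun t => k*t) (fun t => sqrt (Q t))).
    - apply derivable_continuous_pt. reg.
    - apply (continuity_pt_comp Q sqrt c).
      + apply derivable_continuous_pt. unfold Q. reg.
      + apply continuity_pt_sqrt. auto. }
  destruct (continuity_ab_maj h (-1) 1 ltac:(lra) Hcont) as [t [Hmax Ht]].
  exists ((1 + h t)/4). split.
  - set (sT := sqrt (1 - t*t)).
    assert (HsT : sT * sT = 1 - t*t) by (apply sqrt_sqrt; nra).
    clearbody sT.
    destruct (Rle_dec (q*q) (p*p)) as [Hpq|Hpq].
    + assert (EP : P = p*p) by (apply Rmax_left; lra).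
      destruct (exists_b (p*sT) 0 (k+x*t)) as [b1 [b2 [b3 [Hb Hd]]]].
      exists sT, 0, t, b1, b2, b3. split; [nra|]. split; [exact Hb|].
      replace (p * sT * (p * sT) + 0 * 0 + (k + x * t) * (k + x * t)) with (Q t) in Hd
        by (unfold Q; rewrite EP, <- HsT; ring).
      unfold Fv, h. rewrite <- Hd. field.
    + assert (EP : P = q*q) by (apply Rmax_right; lra).
      destruct (exists_b 0 (q*sT) (k+x*t)) as [b1 [b2 [b3 [Hb Hd]]]].
      exists 0, sT, t, b1, b2, b3. split; [nra|]. split; [exact Hb|].
      replace (0 * 0 + q * sT * (q * sT) + (k + x * t) * (k + x * t)) with (Q t) in Hd
        by (unfold Q; rewrite EP, <- HsT; ring).
      unfold Fv, h. rewrite <- Hd. field.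
  - intros a1 a2 a3 b1 b2 b3 Ha Hb.
    assert (Ha3 : -1 <= a3 <= 1) by nra.
    specialize (Hmax a3 Ha3).
    pose proof (cs_sqrt (p*a1) (q*a2) (k + x*a3) b1 b2 b3 Hb) as Hcs.
    assert (Hw : p*a1*(p*a1) + q*a2*(q*a2) + (k+x*a3)*(k+x*a3) <= Q a3).
    { unfold Q.
      assert (p*p*(a1*a1) <= P*(a1*a1)) by (apply Rmult_le_compat_r; [apply Rle_0_sqr| lra]).
      assert (q*q*(a2*a2) <= P*(a2*a2)) by (apply Rmult_le_compat_r; [apply Rle_0_sqr| lra]).
      replace (1 - a3*a3) with (a1*a1 + a2*a2) by lra. nra. }
    pose proof (sqrt_le_1_alt _ _ Hw).
    unfold Fv. unfold h in Hmax |- *. cbv beta in Hmax |- *. lra.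
Qed.

Lemma tr_attain r k p q x m :
  (forall psi phi, unit_vec psi -> unit_vec phi ->
     overlap r psi phi = Fv k p q x (bx psi) (by_ psi) (bz psi) (bx phi) (by_ phi) (bz phi)) ->
  (exists a1 a2 a3 b1 b2 b3, a1*a1+a2*a2+a3*a3 = 1 /\ b1*b1+b2*b2+b3*b3 = 1 /\
     Fv k p q x a1 a2 a3 b1 b2 b3 = m) ->
  exists psi phi, unit_vec psi /\ unit_vec phi /\ overlap r psi phi = m.
Proof.
  intros H [a1 [a2 [a3 [b1 [b2 [b3 [Ha [Hb Hm]]]]]]]].
  destruct (state_of a1 a2 a3 Ha) as [psi [Hpsi [E1 [E2 E3]]]].
  destruct (state_of b1 b2 b3 Hb) as [phi [Hphi [F1 [F2 F3]]]].
  exists psi, phi. repeat split; auto.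
  rewrite H by auto. rewrite E1, E2, E3, F1, F2, F3. exact Hm.
Qed.

Lemma tr_ub r k p q x m :
  (forall psi phi, unit_vec psi -> unit_vec phi ->
     overlap r psi phi = Fv k p q x (bx psi) (by_ psi) (bz psi) (bx phi) (by_ phi) (bz phi)) ->
  (forall a1 a2 a3 b1 b2 b3, a1*a1+a2*a2+a3*a3 = 1 -> b1*b1+b2*b2+b3*b3 = 1 ->
     Fv k p q x a1 a2 a3 b1 b2 b3 <= m) ->
  forall psi phi, unit_vec psi -> unit_vec phi -> overlap r psi phi <= m.
Proof.
  intros H Hub psi phi Hpsi Hphi. rewrite H by auto.
  apply Hub; apply bloch_norm; auto.
Qed.
Lemma pow_red (c K : R) : c * c = K -> forall n, c ^ S (S n) = c ^ n * K.
Proof. intros H n. simpl. rewrite <- H. ring. Qed.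

Ltac polyred s c r H1 H2 :=
  let Hc := fresh in let Hr := fresh in
  assert (Hc := pow_red c (1 - s*s) ltac:(lra));
  assert (Hr := pow_red r 2 H2);
  ring_simplify; repeat rewrite Hc; repeat rewrite Hr; ring.

Definition Mform s r := (1 + (1 - 2*s*s) + r*s)^2/(3 + (1 - 2*s*s))^2.
Definition A1f s c r := (s + r*(c*c))/(1+c*c).
Definition T0f s c r := c*(r-s)/(1+c*c).
Definition Xf s r := 2*s*(s-r)/(3 + (1 - 2*s*s)).

Lemma alg_unit s c r : s*s+c*c = 1 -> r*r = 2 ->
  A1f s c r * A1f s c r + 0*0 + T0f s c r * T0f s c r = 1.
Proof.
  intros H1 H2. assert (HD: 1 + c*c <> 0) by nra.
  unfold A1f, T0f. field_simplify_eq; [|assumption]. polyred s c r H1 H2.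
Qed.

Lemma alg_state s c r x q : s*s+c*c = 1 -> r*r = 2 ->
  Fv (c*s*(1+x)) (s*s - x*(c*c)) q x (A1f s c r) 0 (T0f s c r) (A1f s c r) 0 (T0f s c r)
  = Mform s r.
Proof.
  intros H1 H2.
  assert (HD: 1 + c*c <> 0) by nra.
  assert (HE: 3 + (1 - 2*s*s) <> 0) by nra.
  unfold Fv, A1f, T0f, Mform. field_simplify_eq; [|split; assumption].
  polyred s c r H1 H2.
Qed.

Lemma alg_pX s c r : s*s+c*c = 1 -> r*r = 2 ->
  s*s - Xf s r * (c*c) - Xf s r = r*s.
Proof.
  intros H1 H2.
  assert (HE: 3 + (1 - 2*s*s) <> 0) by nra.
  unfold Xf. field_simplify_eq; [|assumption]. polyred s c r H1 H2.
Qed.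

Lemma alg_upper s c r : s*s+c*c = 1 -> r*r = 2 -> 0 < s -> 0 < r ->
  1/4*(1 + (s*s - Xf s r * (c*c)) + (c*s*(1+Xf s r))*(c*s*(1+Xf s r))/(r*s)) = Mform s r.
Proof.
  intros H1 H2 Hs Hr.
  assert (HE: 3 + (1 - 2*s*s) <> 0) by nra.
  unfold Xf, Mform. field_simplify_eq; [|repeat split; lra].
  polyred s c r H1 H2.
Qed.

Lemma alg_Xrange s r : r*r = 2 -> 0 < r -> 0 <= s <= 1 -> -1 <= Xf s r <= 1.
Proof.
  intros H2 Hr Hs.
  assert (Hr1 : 1 < r) by nra. assert (Hr2 : r < 2) by nra.
  assert (HE: 0 < 3 + (1 - 2*s*s)) by nra.
  assert (EX : Xf s r * (3 + (1 - 2*s*s)) = 2*s*(s-r)) by (unfold Xf; field; lra).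
  split; nra.
Qed.
Lemma trig_facts g1 : PI/4 <= g1 <= PI/2 ->
  sin g1 * sin g1 + cos g1 * cos g1 = 1 /\ 0 <= cos g1 /\ cos g1 <= sin g1 /\
  0 < sin g1 /\ sin g1 <= 1.
Proof.
  intros Hg. pose proof PI_RGT_0.
  pose proof (sin2_cos2 g1) as H1. unfold Rsqr in H1.
  repeat split.
  - exact H1.
  - apply cos_ge_0; lra.
  - rewrite <- sin_shift. apply sin_incr_1; lra.
  - apply sin_gt_0; lra.
  - apply SIN_bound.
Qed.

Lemma sqrt2_facts : sqrt 2 * sqrt 2 = 2 /\ 0 < sqrt 2.
Proof. split; [apply sqrt_sqrt; lra | apply sqrt_lt_R0; lra]. Qed.

Lemma Mval_eq g1 : Mval g1 = Mform (sin g1) (sqrt 2).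
Proof. unfold Mval, Mform. rewrite cos_2a_sin. reflexivity. Qed.

Lemma x3star_eq g1 : x3star g1 = Xf (sin g1) (sqrt 2).
Proof. unfold x3star, Xf. rewrite cos_2a_sin. reflexivity. Qed.

Lemma state0 g1 x : PI/4 <= g1 <= PI/2 ->
  exists psi, unit_vec psi /\ overlap (rho g1 (PI/2 - g1) x) psi psi = Mval g1.
Proof.
  intros Hg. destruct (trig_facts g1 Hg) as [H1 _].
  destruct sqrt2_facts as [H2 _].
  destruct (state_of _ _ _ (alg_unit _ _ _ H1 H2)) as [psi [Hpsi [E1 [E2 E3]]]].
  exists psi. split; [exact Hpsi|].
  rewrite ov_reduce by exact Hpsi. rewrite E1, E2, E3, Mval_eq.
  apply alg_state; assumption.
Qed.

Lemma upper0 g1 : PI/4 <= g1 <= PI/2 -> forall psi phi, unit_vec psi -> unit_vec phi ->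
  overlap (rho g1 (PI/2 - g1) (x3star g1)) psi phi <= Mval g1.
Proof.
  intros Hg psi phi Hpsi Hphi.
  destruct (trig_facts g1 Hg) as [H1 [Hc0 [Hcs [Hs0 Hs1]]]].
  destruct sqrt2_facts as [H2 Hr].
  rewrite ov_reduce by assumption. rewrite Mval_eq, x3star_eq.
  set (s := sin g1) in *. set (c := cos g1) in *. set (r := sqrt 2) in *.
  clearbody s c r.
  pose proof (alg_Xrange s r H2 Hr ltac:(lra)) as HX.
  pose proof (alg_pX s c r H1 H2) as HpX.
  pose proof (alg_upper s c r H1 H2 Hs0 Hr) as HU.
  set (X := Xf s r) in *. clearbody X.
  pose proof (bloch_norm psi Hpsi). pose proof (bloch_norm phi Hphi).
  assert (EX : X*(s*s+c*c) = X) by (rewrite H1; ring).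
  assert (HA : 0 <= (s*s-c*c)*(1+X)) by (apply Rmult_le_pos; nra).
  assert (HB : 0 <= s*s*(1+X)) by (apply Rmult_le_pos; nra).
  assert (Hrs : 0 < r*s) by (apply Rmult_lt_0_compat; lra).
  assert (Hq : Rabs (c*c - X*(s*s)) <= s*s - X*(c*c)).
  { apply Rabs_le. split; lra. }
  assert (Hx : Rabs X <= s*s - X*(c*c)).
  { apply Rabs_le. split; lra. }
  assert (Hpx : 0 < s*s - X*(c*c) - X) by (rewrite HpX; lra).
  pose proof (ub_gen (c*s*(1+X)) (s*s - X*(c*c)) (c*c - X*(s*s)) X
    (bx psi) (by_ psi) (bz psi) (bx phi) (by_ phi) (bz phi) Hq Hx Hpx H H0) as Hub.
  rewrite HpX in Hub.
  rewrite <- HU.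
  unfold Fv. lra.
Qed.

Lemma Mform_mono a b r : r*r = 2 -> 0 < r -> 0 <= a -> a < b -> b <= 1 ->
  Mform a r < Mform b r.
Proof.
  intros H2 Hr Ha Hab Hb.
  assert (Hr1 : 1 < r) by nra.
  set (Na := 1 + (1 - 2*a*a) + r*a). set (Ea := 3 + (1 - 2*a*a)).
  set (Nb := 1 + (1 - 2*b*b) + r*b). set (Eb := 3 + (1 - 2*b*b)).
  assert (HEa : 0 < Ea) by (unfold Ea; nra). assert (HEb : 0 < Eb) by (unfold Eb; nra).
  assert (HNa : 0 < Na) by (unfold Na; nra). assert (HNb : 0 < Nb) by (unfold Nb; nra).
  assert (Key : Nb*Ea - Na*Eb = (b-a)*(2*r*((r-a)*(r-b)))).
  { unfold Na, Nb, Ea, Eb. assert (Hrr := pow_red r 2 H2).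
    ring_simplify. repeat rewrite Hrr. ring. }
  assert (Hpos : 0 < (b-a)*(2*r*((r-a)*(r-b)))).
  { apply Rmult_lt_0_compat; [lra|]. apply Rmult_lt_0_compat; [lra|].
    apply Rmult_lt_0_compat; lra. }
  assert (Hlt : Na/Ea < Nb/Eb).
  { apply (Rmult_lt_reg_r (Ea*Eb)); [nra|].
    replace (Na/Ea*(Ea*Eb)) with (Na*Eb) by (field; lra).
    replace (Nb/Eb*(Ea*Eb)) with (Nb*Ea) by (field; lra). lra. }
  assert (Hp : 0 < Na/Ea) by (apply Rdiv_lt_0_compat; lra).
  unfold Mform. fold Na Ea Nb Eb.
  replace (Na^2/Ea^2) with ((Na/Ea)*(Na/Ea)) by (field; lra).
  replace (Nb^2/Eb^2) with ((Nb/Eb)*(Nb/Eb)) by (field; lra).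
  nra.
Qed.

Theorem mainTheorem4 :
  (forall g1 : R, PI / 4 <= g1 <= PI / 2 ->
     let g2 := PI / 2 - g1 in
     (* g(rho(x3)) is well defined (the max exists) for every x3 in [-1,1] *)
     (forall x3 : R, -1 <= x3 <= 1 -> exists m, is_g (rho g1 g2 x3) m) /\
     (* Mval g1 is a lower bound of g(rho(x3)) on [-1,1] *)
     (forall x3 m : R, -1 <= x3 <= 1 -> is_g (rho g1 g2 x3) m -> Mval g1 <= m) /\
     (* ... attained at x3star g1 *)
     (-1 <= x3star g1 <= 1 /\ is_g (rho g1 g2 (x3star g1)) (Mval g1))) /\
  (* the minimum value is increasing in g1 on [pi/4, pi/2] *)
  (forall a b : R, PI / 4 <= a -> a < b -> b <= PI / 2 -> Mval a < Mval b) /\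
  Mval (PI / 4) = 4 / 9 /\ x3star (PI / 4) = -1 / 3.
Proof.
  pose proof PI_RGT_0 as HPI.
  destruct sqrt2_facts as [H2 Hr].
  split; [|split; [|split]].
  - intros g1 Hg g2. subst g2.
    destruct (trig_facts g1 Hg) as [H1 [Hc0 [Hcs [Hs0 Hs1]]]].
    split; [|split].
    + intros x3 Hx.
      destruct (exist_max (cos g1 * sin g1 * (1 + x3)) (sin g1 * sin g1 - x3 * (cos g1 * cos g1))
          (cos g1 * cos g1 - x3 * (sin g1 * sin g1)) x3) as [m [Hat Hub]].
      exists m. split.
      * eapply tr_attain; [|exact Hat]. intros; apply ov_reduce; auto.
      * eapply tr_ub; [|exact Hub]. intros; apply ov_reduce; auto.
    + intros x3 m Hx [_ Hub].
      destruct (state0 g1 x3 Hg) as [psi [Hpsi E]].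
      rewrite <- E. apply Hub; auto.
    + split.
      * rewrite x3star_eq. apply alg_Xrange; auto; lra.
      * split.
        -- destruct (state0 g1 (x3star g1) Hg) as [psi [Hpsi E]].
           exists psi, psi. auto.
        -- apply upper0; auto.
  - intros a b Ha Hab Hb.
    rewrite !Mval_eq. apply Mform_mono; auto.
    + left; apply sin_gt_0; lra.
    + apply sin_increasing_1; lra.
    + apply SIN_bound.
  - rewrite Mval_eq, sin_PI4. unfold Mform.
    assert (sqrt 2 <> 0) by lra.
    assert (Hrr := pow_red (sqrt 2) 2 H2).
    field_simplify_eq.
    + repeat rewrite Hrr. ring.
    + rewrite H2. split; lra.
  - rewrite x3star_eq, sin_PI4. unfold Xf.
    assert (sqrt 2 <> 0) by lra.
    assert (Hrr := pow_red (sqrt 2) 2 H2).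
    field_simplify_eq.
    + repeat rewrite Hrr. ring.
    + rewrite ?H2. split; lra.
Qed.
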